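(* Let $\mathbf C$ be a category of coframes and $L$ a $\mathbf C$-object. (1) If $L$ is spatial, then $\nu=\operatorname{adh}_{\lim_\nu}$ for every adherence structure $\nu$ on $L$. (2) If $L$ is prime-continuous, then $\lim=\lim_{\operatorname{adh}_{\lim}}$ for every classical pretopological convergence structure $\lim$ on $L$. (3) If $L$ is both spatial and prime-continuous, then the maps $\nu\mapsto\lim_\nu$ and $\lim\mapsto\operatorname{adh}_{\lim}$ define an order isomorphism between adherence structures and classical pretopological convergence structures on $L$ (both ordered pointwise).
   Context: A category of coframes has coframes (complete lattices where arbitrary infima distribute over binary suprema) as objects and coframe morphisms. $\mathcal C_L$ is the set of complemented elements of $L$. A filter on $L$ is a non-empty upward-closed subset closed under binary meets ($L$ allowed); $\mathbb F L$ is the set of filters. For $\mathcal A\subseteq L$, $\mathcal A^\#=\{\ell: a\wedge\ell\ne\bot\ \forall a\in\mathcal A\}$. A convergence structure on $L$ is a monotone map $\lim:\mathbb F L\to L$; it is pretopological if $\lim\bigcap_i\mathcal F_i=\bigwedge_i\lim\mathcal F_i$ for every family of filters, and classical if $\mathcal F\cap\mathcal C_L=\mathcal G\cap\mathcal C_L$ implies $\lim\mathcal F=\lim\mathcal G$. Its raw adherence is $\operatorname{adh}^0_{\lim}\ell=\bigvee\{\lim\mathcal F:\ell\in\mathcal F^\#\}$, and its adherence is $\operatorname{adh}_{\lim}\ell=\bigwedge\{\operatorname{adh}^0_{\lim}a:a\in\mathcal C_L,a\ge\ell\}$. An adherence structure on $L$ is a monotone $\nu:L\to L$ preserving finite suprema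 of complemented elements with $\nu(\ell)=\bigwedge\{\nu(a):a\in\mathcal C_L,a\ge\ell\}$; it induces $\lim_\nu\mathcal F=\bigwedge\{\nu(a):a\in\mathcal C_L\cap\mathcal F^\#\}$. $L$ is spatial if every element is a supremum of join-prime elements (an element $x\neq\bot$ with $x\le\ell_1\vee\ell_2$ implying $x\le\ell_1$ or $x\le\ell_2$). Write $\ell\lll\ell'$ if for every $S\subseteq L$ with $\ell'\le\bigvee S$ some element of $S$ is $\ge\ell$; $L$ is prime-continuous if every element $\ell$ is the supremum of the elements $\lll\ell$. *)

(* Defs.v *)
Set Implicit Arguments.

Record coframe := Coframe {
  carrier :> Type;
  le : carrier -> carrier -> Prop;
  le_refl : forall x, le x x;
  le_trans : forall x y z, le x y -> le y z -> le x z;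
  le_antisym : forall x y, le x y -> le y x -> x = y;
  sup : (carrier -> Prop) -> carrier;
  sup_ub : forall (S : carrier -> Prop) x, S x -> le x (sup S);
  sup_least : forall (S : carrier -> Prop) y,
      (forall x, S x -> le x y) -> le (sup S) y;
  inf : (carrier -> Prop) -> carrier;
  inf_lb : forall (S : carrier -> Prop) x, S x -> le (inf S) x;
  inf_greatest : forall (S : carrier -> Prop) y,
      (forall x, S x -> le y x) -> le y (inf S);
  inf_distr : forall (S : carrier -> Prop) (b : carrier),
      sup (fun x => x = b \/ x = inf S)
      = inf (fun y => exists s, S s /\ y = sup (fun x => x = b \/ x = s))
}.

Arguments le {c} _ _.
Arguments sup {c} _.
Arguments inf {c} _.

Section Coframe.
Context {L : coframe}.

Definition join (a b : L) : L := sup (fun x => x = a \/ x = b).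
Definition meet (a b : L) : L := inf (fun x => x = a \/ x = b).
Definition bot : L := sup (fun _ => False).
Definition top : L := inf (fun _ => False).

Definition complemented (a : L) : Prop :=
  exists b : L, meet a b = bot /\ join a b = top.

(** filters (the whole of L is allowed) *)
Definition is_filter (F : L -> Prop) : Prop :=
  (exists x, F x) /\
  (forall x y, F x -> le x y -> F y) /\
  (forall x y, F x -> F y -> F (meet x y)).

Record filter := Filter { fset :> L -> Prop; fset_filter : is_filter fset }.

Definition grill (A : L -> Prop) : L -> Prop :=
  fun l => forall a, A a -> meet a l <> bot.

Lemma bigcap_is_filter (I : Type) (Fs : I -> filter) :
  is_filter (fun x => forall i, Fs i x).
Proof.
split; [| split].
- exists top. intros i. destruct (fset_filter (Fs i)) as [[x Hx] [Hup _]].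
  apply (Hup x); [exact Hx|]. apply inf_greatest. intros y [].
- intros x y Hx Hxy i. destruct (fset_filter (Fs i)) as [_ [Hup _]].
  exact (Hup x y (Hx i) Hxy).
- intros x y Hx Hy i. destruct (fset_filter (Fs i)) as [_ [_ Hm]].
  exact (Hm x y (Hx i) (Hy i)).
Qed.

Definition bigcap_filter (I : Type) (Fs : I -> filter) : filter :=
  Filter (bigcap_is_filter Fs).

Definition convergence_structure (lim : filter -> L) : Prop :=
  forall F G : filter, (forall x, F x -> G x) -> le (lim F) (lim G).

Definition pretopological (lim : filter -> L) : Prop :=
  forall (I : Type) (Fs : I -> filter),
    lim (bigcap_filter Fs) = inf (fun y => exists i, y = lim (Fs i)).

Definition classical (lim : filter -> L) : Prop :=
  forall F G : filter,
    (forall a, complemented a -> (F a <-> G a)) -> lim F = lim G.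

Definition classical_pretop_convergence (lim : filter -> L) : Prop :=
  convergence_structure lim /\ pretopological lim /\ classical lim.

Definition raw_adh (lim : filter -> L) (l : L) : L :=
  sup (fun y => exists F : filter, grill F l /\ y = lim F).

Definition adh (lim : filter -> L) (l : L) : L :=
  inf (fun y => exists a, complemented a /\ le l a /\ y = raw_adh lim a).

Definition adherence_structure (nu : L -> L) : Prop :=
  (forall x y, le x y -> le (nu x) (nu y)) /\
  nu bot = bot /\
  (forall a b, complemented a -> complemented b ->
     nu (join a b) = join (nu a) (nu b)) /\
  (forall l, nu l = inf (fun y => exists a, complemented a /\ le l a /\ y = nu a)).

Definition lim_of (nu : L -> L) (F : filter) : L :=
  inf (fun y => exists a, complemented a /\ grill F a /\ y = nu a).

Definition join_prime (x : L) : Prop :=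
  x <> bot /\ forall l1 l2, le x (join l1 l2) -> le x l1 \/ le x l2.

Definition spatial : Prop :=
  forall l : L, l = sup (fun x => join_prime x /\ le x l).

Definition way_below (l l' : L) : Prop :=
  forall S : L -> Prop, le l' (sup S) -> exists s, S s /\ le l s.

Definition prime_continuous : Prop :=
  forall l : L, l = sup (fun x => way_below x l).

Definition le_adh (nu1 nu2 : L -> L) : Prop := forall l, le (nu1 l) (nu2 l).
Definition le_lim (lim1 lim2 : filter -> L) : Prop :=
  forall F, le (lim1 F) (lim2 F).

End Coframe.

Arguments filter L : clear implicits.
Arguments bot L : clear implicits.
Arguments top L : clear implicits.
Arguments spatial L : clear implicits.
Arguments prime_continuous L : clear implicits.

(* Main.v *)
Require Import Defs.
From Stdlib Require Import Classical.

Section Lemmas.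
Context {L : coframe}.

Lemma refl (x : L) : le x x. Proof. exact (le_refl L x). Qed.
Lemma trans (x y z : L) : le x y -> le y z -> le x z. Proof. exact (le_trans L x y z). Qed.
Lemma anti (x y : L) : le x y -> le y x -> x = y. Proof. exact (le_antisym L x y). Qed.
Lemma supub (S : L -> Prop) x : S x -> le x (sup S). Proof. exact (sup_ub L S x). Qed.
Lemma supl (S : L -> Prop) y : (forall x, S x -> le x y) -> le (sup S) y.
Proof. exact (sup_least L S y). Qed.
Lemma infl (S : L -> Prop) x : S x -> le (inf S) x. Proof. exact (inf_lb L S x). Qed.
Lemma infg (S : L -> Prop) y : (forall x, S x -> le y x) -> le y (inf S).
Proof. exact (inf_greatest L S y). Qed.

Lemma join_ub_l (a b : L) : le a (join a b). Proof. apply supub; auto. Qed.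
Lemma join_ub_r (a b : L) : le b (join a b). Proof. apply supub; auto. Qed.
Lemma join_lub (a b c : L) : le a c -> le b c -> le (join a b) c.
Proof. intros. apply supl; intros x [-> | ->]; auto. Qed.
Lemma meet_lb_l (a b : L) : le (meet a b) a. Proof. apply infl; auto. Qed.
Lemma meet_lb_r (a b : L) : le (meet a b) b. Proof. apply infl; auto. Qed.
Lemma meet_glb (a b c : L) : le c a -> le c b -> le c (meet a b).
Proof. intros. apply infg; intros x [-> | ->]; auto. Qed.
Lemma bot_least (x : L) : le (bot L) x. Proof. apply supl; intros _ []. Qed.
Lemma top_greatest (x : L) : le x (top L). Proof. apply infg; intros _ []. Qed.
Lemma le_bot_eq (x : L) : le x (bot L) -> x = bot L.
Proof. intros; apply anti; auto using bot_least. Qed.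
Lemma top_le_eq (x : L) : le (top L) x -> x = top L.
Proof. intros; apply anti; auto using top_greatest. Qed.
Lemma meet_comm (a b : L) : meet a b = meet b a.
Proof. apply anti; apply meet_glb; auto using meet_lb_l, meet_lb_r. Qed.
Lemma join_comm (a b : L) : join a b = join b a.
Proof. apply anti; apply join_lub; auto using join_ub_l, join_ub_r. Qed.
Lemma meet_mono (a b c d : L) : le a b -> le c d -> le (meet a c) (meet b d).
Proof.
  intros. apply meet_glb; [apply trans with a | apply trans with c];
    auto using meet_lb_l, meet_lb_r.
Qed.

Lemma inf_ext (P Q : L -> Prop) : (forall y, P y <-> Q y) -> inf P = inf Q.
Proof.
  intros H. apply anti; apply infg; intros x Hx; apply infl; apply H; auto.
Qed.

Lemma join_distr (b x y : L) : join b (meet x y) = meet (join b x) (join b y).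
Proof.
  pose proof (inf_distr L (fun z => z = x \/ z = y) b) as H.
  change (join b (meet x y) =
          inf (fun y0 => exists s, (s = x \/ s = y) /\ y0 = join b s)) in H.
  rewrite H. unfold meet. apply inf_ext. intros z; split.
  - intros [s [[-> | ->] ->]]; auto.
  - intros [-> | ->]; [exists x | exists y]; split; auto.
Qed.

Lemma meet_distr (a x y : L) : le (meet a (join x y)) (join (meet a x) (meet a y)).
Proof.
  rewrite (join_comm (meet a x) (meet a y)). rewrite join_distr. apply meet_glb.
  - apply trans with a; [apply meet_lb_l | apply join_ub_r].
  - rewrite (join_comm (meet a y) x). rewrite join_distr. apply meet_glb.
    + apply trans with a; [apply meet_lb_l | apply join_ub_r].
    + apply meet_lb_r.
Qed.

Lemma compl_le (d d' x : L) : meet d x = bot L -> join d d' = top L -> le x d'.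
Proof.
  intros Hm Hj. apply trans with (join d' (meet d x)).
  - rewrite join_distr. apply meet_glb.
    + rewrite join_comm, Hj. apply top_greatest.
    + apply join_ub_r.
  - rewrite Hm. apply join_lub; [apply refl | apply bot_least].
Qed.

Lemma compl_sym (a a' : L) : meet a a' = bot L -> join a a' = top L -> complemented a'.
Proof. intros. exists a. rewrite meet_comm, join_comm. auto. Qed.

Lemma meet_compl (d1 d1' d2 d2' : L) :
  meet d1 d1' = bot L -> join d1 d1' = top L ->
  meet d2 d2' = bot L -> join d2 d2' = top L ->
  meet (meet d1 d2) (join d1' d2') = bot L /\ join (meet d1 d2) (join d1' d2') = top L.
Proof.
  intros H1m H1j H2m H2j. split.
  - apply le_bot_eq. eapply trans; [apply meet_distr|]. apply join_lub.
    + rewrite <- H1m. apply meet_mono; [apply meet_lb_l | apply refl].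
    + rewrite <- H2m. apply meet_mono; [apply meet_lb_r | apply refl].
  - apply top_le_eq. rewrite join_comm, join_distr. apply meet_glb.
    + rewrite <- H1j. apply join_lub; [apply join_ub_r|].
      apply trans with (join d1' d2'); apply join_ub_l.
    + rewrite <- H2j. apply join_lub; [apply join_ub_r|].
      apply trans with (join d1' d2'); [apply join_ub_r | apply join_ub_l].
Qed.

Lemma meet_bot2 (f g a b : L) : meet f a = bot L -> meet g b = bot L ->
  meet (meet f g) (join a b) = bot L.
Proof.
  intros Hf Hg. apply le_bot_eq. eapply trans; [apply meet_distr|]. apply join_lub.
  - rewrite <- Hf. apply meet_mono; [apply meet_lb_l | apply refl].
  - rewrite <- Hg. apply meet_mono; [apply meet_lb_r | apply refl].
Qed.

Lemma f_up (F : filter L) x y : F x -> le x y -> F y.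
Proof. destruct (fset_filter F) as [_ [H _]]; eauto. Qed.
Lemma f_meet (F : filter L) x y : F x -> F y -> F (meet x y).
Proof. destruct (fset_filter F) as [_ [_ H]]; eauto. Qed.
Lemma f_ne (F : filter L) : exists x, F x.
Proof. destruct (fset_filter F) as [H _]; eauto. Qed.

Lemma grill_mono_l (F : filter L) a b : grill F a -> le a b -> grill F b.
Proof.
  intros H Hab f Hf Hfb. apply (H f Hf). apply le_bot_eq. rewrite <- Hfb.
  apply meet_mono; [apply refl | auto].
Qed.

Lemma grill_bot (F : filter L) : ~ grill F (bot L).
Proof.
  destruct (f_ne F) as [x Hx]. intro H; apply (H x Hx). apply le_bot_eq, meet_lb_r.
Qed.

Lemma grill_compl (F : filter L) a a' : meet a a' = bot L -> join a a' = top L ->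
  (grill F a <-> ~ F a').
Proof.
  intros Hm Hj. split.
  - intros H Ha'. apply (H a' Ha'). rewrite meet_comm; auto.
  - intros Hn f Hf Hfa. apply Hn. apply f_up with f; auto.
    apply compl_le with a; auto. rewrite meet_comm; auto.
Qed.

Lemma grill_join (F : filter L) a b : grill F (join a b) -> grill F a \/ grill F b.
Proof.
  intros H. destruct (classic (grill F a)) as [Ha|Ha]; auto.
  destruct (classic (grill F b)) as [Hb|Hb]; auto. exfalso.
  unfold grill in Ha, Hb.
  apply not_all_ex_not in Ha as [f Hf]. apply imply_to_and in Hf as [Hf1 Hf2].
  apply NNPP in Hf2.
  apply not_all_ex_not in Hb as [g Hg]. apply imply_to_and in Hg as [Hg1 Hg2].
  apply NNPP in Hg2.
  apply (H (meet f g)); [apply f_meet; auto | apply meet_bot2; auto].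
Qed.

Lemma raw_adh_mono (lim : filter L -> L) a b : le a b -> le (raw_adh lim a) (raw_adh lim b).
Proof.
  intros Hab. apply supl. intros y [F [HF ->]]. apply supub. exists F.
  split; [eapply grill_mono_l; eauto | reflexivity].
Qed.

Lemma adh_compl (lim : filter L -> L) a : complemented a -> adh lim a = raw_adh lim a.
Proof.
  intros Ha. apply anti.
  - apply infl. exists a; split; auto; split; [apply refl | reflexivity].
  - apply infg. intros y [b [_ [Hab ->]]]. apply raw_adh_mono; auto.
Qed.

Lemma adh_le_raw (lim : filter L -> L) l a : complemented a -> le l a ->
  le (adh lim l) (raw_adh lim a).
Proof. intros. apply infl. exists a; auto. Qed.

Lemma adh_mono (lim : filter L -> L) l l' : le l l' -> le (adh lim l) (adh lim l').
Proof.
  intros H. apply infg. intros y [a [Ha [Hla ->]]]. apply infl.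
  exists a; split; auto; split; [apply trans with l'; auto | reflexivity].
Qed.

Lemma adh_mono_lim (lim1 lim2 : filter L -> L) : le_lim lim1 lim2 ->
  forall l, le (adh lim1 l) (adh lim2 l).
Proof.
  intros H l. apply infg. intros y [a [Ha [Hla ->]]].
  apply trans with (raw_adh lim1 a). apply infl; exists a; auto.
  apply supl. intros y [F [HF ->]]. apply trans with (lim2 F); auto.
  apply supub; exists F; auto.
Qed.

Lemma lim_of_mono (nu1 nu2 : L -> L) : le_adh nu1 nu2 ->
  forall F, le (lim_of nu1 F) (lim_of nu2 F).
Proof.
  intros H F. apply infg. intros y [a [Ha [Hg ->]]].
  apply trans with (nu1 a); auto. apply infl; exists a; auto.
Qed.

Lemma raw_adh_join (lim : filter L -> L) a b :
  raw_adh lim (join a b) = join (raw_adh lim a) (raw_adh lim b).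
Proof.
  apply anti.
  - apply supl. intros y [F [HF ->]].
    destruct (grill_join F a b HF) as [H|H].
    + apply trans with (raw_adh lim a); [apply supub; exists F; auto | apply join_ub_l].
    + apply trans with (raw_adh lim b); [apply supub; exists F; auto | apply join_ub_r].
  - apply join_lub; apply raw_adh_mono; [apply join_ub_l | apply join_ub_r].
Qed.

Definition Fx (nu : L -> L) (x : L) : L -> Prop :=
  fun l => exists d d', meet d d' = bot L /\ join d d' = top L /\
                        ~ le x (nu d') /\ le d l.

Lemma Fx_filter (nu : L -> L) (x : L) :
  adherence_structure nu -> join_prime x -> is_filter (Fx nu x).
Proof.
  intros [Hmon [Hbot [Hjoin _]]] [Hx0 Hjp]. split; [|split].
  - exists (top L). exists (top L), (bot L). split; [|split; [|split]].
    + apply le_bot_eq, meet_lb_r.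
    + apply top_le_eq, join_ub_l.
    + rewrite Hbot. intro H. apply Hx0. apply le_bot_eq; auto.
    + apply refl.
  - intros l l' [d [d' [Hm [Hj [Hn Hl]]]]] Hll. exists d, d'.
    repeat split; auto. apply trans with l; auto.
  - intros l1 l2 [d1 [d1' [H1m [H1j [H1n H1l]]]]] [d2 [d2' [H2m [H2j [H2n H2l]]]]].
    exists (meet d1 d2), (join d1' d2').
    destruct (meet_compl d1 d1' d2 d2') as [Hm Hj]; auto.
    split; auto; split; auto; split.
    + rewrite Hjoin by (eapply compl_sym; eauto).
      intro Hx. destruct (Hjp _ _ Hx); auto.
    + apply meet_mono; auto.
Qed.

Lemma part1_compl (Hsp : spatial L) (nu : L -> L) (Hnu : adherence_structure nu) a :
  complemented a -> nu a = raw_adh (lim_of nu) a.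
Proof.
  intros Ha. pose proof Hnu as [Hmon _]. apply anti.
  - apply trans with (sup (fun x => join_prime x /\ le x (nu a))).
    { rewrite <- (Hsp (nu a)). apply refl. }
    apply supl. intros x [Hjp Hx].
    set (F := Filter (Fx_filter nu x Hnu Hjp)).
    apply trans with (lim_of nu F).
    + apply infg. intros y [c [[c' [Hcm Hcj]] [Hg ->]]].
      destruct (classic (le x (nu c))) as [H|H]; auto. exfalso.
      apply (Hg c').
      * exists c', c. rewrite meet_comm, join_comm. repeat split; auto. apply refl.
      * rewrite meet_comm; auto.
    + apply supub. exists F. split; [|reflexivity].
      intros l [d [d' [Hm [Hj [Hn Hl]]]]] Hla. apply Hn.
      apply trans with (nu a); auto. apply Hmon. apply compl_le with d; auto.
      apply le_bot_eq. rewrite <- Hla. apply meet_mono; auto. apply refl.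
  - apply supl. intros y [F [HF ->]]. apply infl. exists a; auto.
Qed.

Lemma part1 (Hsp : spatial L) (nu : L -> L) (Hnu : adherence_structure nu) l :
  nu l = adh (lim_of nu) l.
Proof.
  pose proof Hnu as [_ [_ [_ H4]]]. rewrite (H4 l). unfold adh. apply inf_ext.
  intros y; split; intros [a [Ha [Hla ->]]]; exists a; repeat split; auto.
  - apply part1_compl; auto.
  - symmetry; apply part1_compl; auto.
Qed.

Lemma part2 (Hpc : prime_continuous L) (lim : filter L -> L)
  (Hl : classical_pretop_convergence lim) (F : filter L) :
  lim F = lim_of (adh lim) F.
Proof.
  destruct Hl as [Hmon [Hpre Hcl]]. apply anti.
  - apply infg. intros y [a [Ha [Hg ->]]]. rewrite adh_compl; auto.
    apply supub; exists F; auto.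
  - set (m := lim_of (adh lim) F).
    apply trans with (sup (fun x => way_below x m)).
    { rewrite <- (Hpc m). apply refl. }
    apply supl. intros x Hx.
    set (V := bigcap_filter (fun G : {G : filter L | le x (lim G)} => proj1_sig G)).
    assert (HV : le x (lim V)).
    { unfold V; rewrite Hpre. apply infg. intros y [[G HG] ->]. simpl. exact HG. }
    assert (HVF : forall c, complemented c -> V c -> F c).
    { intros c [c' [Hcm Hcj]] HVc. destruct (classic (F c)) as [|Hn]; auto. exfalso.
      assert (Hg : grill F c').
      { apply (grill_compl F c' c); [rewrite meet_comm; auto | rewrite join_comm; auto | auto]. }
      assert (Hc' : complemented c') by (eapply compl_sym; eauto).
      assert (Hm : le m (raw_adh lim c')).
      { unfold m, lim_of. apply trans with (adh lim c').
        - apply infl; exists c'; auto.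
        - apply adh_le_raw; auto; apply refl. }
      destruct (Hx _ Hm) as [s [[G [HG ->]] Hxs]].
      refine (HG c (HVc (exist _ G Hxs)) _).
      exact Hcm. }
    set (W := bigcap_filter (fun b : bool => if b then V else F)).
    assert (HW : lim W = lim V).
    { apply Hcl. intros a Ha; split.
      - intros H; exact (H true).
      - intros H b; destruct b; simpl; auto. }
    apply trans with (lim V); auto. rewrite <- HW. apply Hmon.
    intros a Ha; exact (Ha false).
Qed.

Lemma lim_of_cpc (nu : L -> L) : adherence_structure nu ->
  classical_pretop_convergence (lim_of nu).
Proof.
  intros Hnu. split; [|split].
  - intros F G HFG. apply infg. intros y [a [Ha [Hg ->]]]. apply infl.
    exists a; repeat split; auto. intros f Hf; apply Hg; auto.
  - intros I Fs. apply anti.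
    + apply infg. intros y [i ->]. apply infg. intros y [a [Ha [Hg ->]]].
      apply infl. exists a. split; auto. split; auto.
      intros f Hf. apply Hg. exact (Hf i).
    + apply infg. intros y [a [[a' [Ham Haj]] [Hg ->]]].
      assert (Hi : exists i, grill (Fs i) a).
      { apply (grill_compl _ a a' Ham Haj) in Hg.
        change (~ forall i, Fs i a') in Hg.
        apply not_all_ex_not in Hg. destruct Hg as [i Hi]. exists i.
        apply (grill_compl _ a a' Ham Haj). auto. }
      destruct Hi as [i Hi]. apply trans with (lim_of nu (Fs i)).
      * apply infl; exists i; reflexivity.
      * apply infl. exists a; repeat split; auto. exists a'; auto.
  - intros F G HFG. unfold lim_of. apply inf_ext.
    intros y; split; intros [a [[a' [Ham Haj]] [Hg ->]]]; exists a;
      (split; [exists a'; auto|]); split; auto;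
      apply (grill_compl _ a a' Ham Haj); apply (grill_compl _ a a' Ham Haj) in Hg;
      intro H; apply Hg; apply HFG; auto; eapply compl_sym; eauto.
Qed.

Lemma adh_struct (lim : filter L -> L) : adherence_structure (adh lim).
Proof.
  split; [|split; [|split]].
  - intros; apply adh_mono; auto.
  - apply anti; [|apply bot_least]. apply trans with (raw_adh lim (bot L)).
    + apply adh_le_raw; [|apply refl]. exists (top L). split.
      * apply le_bot_eq, meet_lb_l.
      * apply top_le_eq, join_ub_r.
    + apply supl. intros y [F [HF _]]. exfalso; apply (grill_bot F HF).
  - intros a b Ha Hb.
    assert (Hab : complemented (join a b)).
    { destruct Ha as [a' [Ham Haj]], Hb as [b' [Hbm Hbj]].
      assert (H1 : meet a' a = bot L) by (rewrite meet_comm; auto).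
      assert (H2 : join a' a = top L) by (rewrite join_comm; auto).
      assert (H3 : meet b' b = bot L) by (rewrite meet_comm; auto).
      assert (H4 : join b' b = top L) by (rewrite join_comm; auto).
      destruct (meet_compl a' a b' b H1 H2 H3 H4) as [Hm Hj].
      eapply compl_sym; eauto. }
    rewrite (adh_compl lim (join a b) Hab), (adh_compl lim a Ha), (adh_compl lim b Hb).
    apply raw_adh_join.
  - intros l. unfold adh at 1. apply inf_ext.
    intros y; split; intros [a [Ha [Hla ->]]]; exists a; repeat split; auto;
      [symmetry|]; apply adh_compl; auto.
Qed.

End Lemmas.

Theorem mainTheorem10 (L : coframe) :
  (* (1) *)
  (spatial L ->
     forall nu : L -> L, adherence_structure nu ->
       forall l : L, nu l = adh (lim_of nu) l) /\
  (* (2) *)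
  (prime_continuous L ->
     forall lim : filter L -> L, classical_pretop_convergence lim ->
       forall F : filter L, lim F = lim_of (adh lim) F) /\
  (* (3) *)
  (spatial L -> prime_continuous L ->
     (* the two maps are well defined *)
     (forall nu : L -> L, adherence_structure nu ->
        classical_pretop_convergence (lim_of nu)) /\
     (forall lim : filter L -> L, classical_pretop_convergence lim ->
        adherence_structure (adh lim)) /\
     (* they are mutually inverse *)
     (forall nu : L -> L, adherence_structure nu ->
        forall l : L, adh (lim_of nu) l = nu l) /\
     (forall lim : filter L -> L, classical_pretop_convergence lim ->
        forall F : filter L, lim_of (adh lim) F = lim F) /\
     (* they preserve and reflect the pointwise orders *)
     (forall nu1 nu2 : L -> L, adherence_structure nu1 -> adherence_structure nu2 ->
        (le_adh nu1 nu2 <-> le_lim (lim_of nu1) (lim_of nu2))) /\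
     (forall lim1 lim2 : filter L -> L,
        classical_pretop_convergence lim1 -> classical_pretop_convergence lim2 ->
        (le_lim lim1 lim2 <-> le_adh (adh lim1) (adh lim2)))).
Proof.
  split. { intros Hsp nu Hnu l. apply part1; auto. }
  split. { intros Hpc lim Hl F. apply part2; auto. }
  intros Hsp Hpc. split. { apply lim_of_cpc. }
  split. { intros lim _; apply adh_struct. }
  split. { intros; symmetry; apply part1; auto. }
  split. { intros; symmetry; apply part2; auto. }
  split.
  - intros nu1 nu2 H1 H2; split.
    + intros H F; apply lim_of_mono; auto.
    + intros H l. rewrite (part1 Hsp nu1 H1 l), (part1 Hsp nu2 H2 l).
      apply adh_mono_lim; auto.
  - intros lim1 lim2 H1 H2; split.
    + intros H l; apply adh_mono_lim; auto.
    + intros H F. rewrite (part2 Hpc lim1 H1 F), (part2 Hpc lim2 H2 F).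
      apply lim_of_mono; auto.
Qed.
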